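(* For any digraph $G$, $\mathrm{sstat}_{\mathtt{vsc}}(G)\ge 1+\mathrm{cr}(G)$.
   Context: All digraphs are finite, simple, without self-loops and have at least one vertex (induced subgraphs appearing as game data may be empty). For a finite set $V$, $V^*$ is the set of finite words over $V$, $\epsilon$ the empty word; $X \preceq Y$ means $X$ is a prefix of $Y$; for $X=a_1\cdots a_n$, $|X|=n$ and $\mathrm{let}(X)=\{a_1,\dots,a_n\}$. $A\Delta B$ is symmetric difference. For $X\subseteq V(G)$, $G\setminus X$ is the subgraph induced by $V(G)\setminus X$. Induced subgraphs are identified with their vertex sets. Cycle-rank $\mathrm{cr}(G)$: $0$ if $G$ is acyclic; $1+\min_{v\in V(G)}\mathrm{cr}(G\setminus\{v\})$ if $G$ is strongly connected (and not acyclic); otherwise the maximum of $\mathrm{cr}(H)$ over strongly connected components $H$ of $G$. A position is a pair $(X,R)$ with $X\in V(G)^*$ and $R$ a (possibly empty) induced subgraph of $G\setminus\mathrm{let}(X)$; it is a $\mathtt{vsc}$-position if $R$ is a strongly connected component of $G\setminus\mathrm{let}(X)$. A $\mathtt{vsc}$-position $(X',R')$ is a $\mathtt{vsc}$-successor of $(X,R)$ if ($X\preceq X'$ or $X'\preceq X$), $|\mathrm{let}(X)\Delta\mathrm{let}(X')|=1$, and every $v'\in R'$ lies in the same strongly connected component of $G\setminus(\mathrm{let}(X)\cap\mathrm{let}(X'))$ as some $v\in R$. If $(\epsilon,G)$ is not a $\mathtt{vsc}$-position it is nevertheless admitted as a special position whose $\mathtt{vsc}$-successors are exactly the $\mathtt{vsc}$-positions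 $(\epsilon,R)$. A $\mathtt{vsc}$-search from $(X_0,R_0)$ is a finite or infinite sequence of such positions with each $(X_{i+1},R_{i+1})$ a $\mathtt{vsc}$-successor of $(X_i,R_i)$; it is complete if it is infinite or $R_n=\emptyset$ for some $n$, and a complete search is winning for the searchers if $R_n=\emptyset$ for some $n$. A complete search from $(\epsilon,G)$ is searcher-stationary if $X_i\preceq X_{i+1}$ for all $i$ with $R_i\neq\emptyset$, and uses at most $k$ searchers if $|X_i|\le k$ for all $i$. A $\mathtt{vsc}$-strategy is a function $\sigma$ from $\mathtt{vsc}$-positions to $V(G)^*$ such that $\sigma(X,R)$ is the first component of some $\mathtt{vsc}$-successor of $(X,R)$; a search is consistent with $\sigma$ if $X_{i+1}=\sigma(X_i,R_i)$ for all $i$. $\sigma$ is winning if every complete consistent search from $(\epsilon,G)$ is winning for the searchers; it is searcher-stationary / uses at most $k$ searchers if every complete consistent search from $(\epsilon,G)$ has that property. $\mathrm{sstat}_{\mathtt{vsc}}(G)$ is the minimum $k$ such that there is a searcher-stationary winning $\mathtt{vsc}$-strategy using at most $k$ searchers. *)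

(* Defs.v *)
(* Digraphs are (T : finType, e : rel T); induced subgraphs
   are identified with their vertex sets {set T}. *)
From mathcomp Require Import all_boot.
Set Implicit Arguments. Unset Strict Implicit. Unset Printing Implicit Defensive.

Section Digraph.
Variables (T : finType) (e : rel T).

Definition erestr (S : {set T}) : rel T := [rel x y | [&& x \in S, y \in S & e x y]].

Definition sconn (S : {set T}) (x y : T) : bool :=
  [&& x \in S, y \in S, connect (erestr S) x y & connect (erestr S) y x].

Definition scc_of (S : {set T}) (x : T) : {set T} := [set y | sconn S x y].

Definition is_scc (S C : {set T}) : bool := [exists x in S, C == scc_of S x].

Definition sccs (S : {set T}) : {set {set T}} := [set C | is_scc S C].

Definition strongly_connected (S : {set T}) : bool :=
  (S != set0) && [forall x in S, forall y in S, sconn S x y].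

Definition acyclic (S : {set T}) : bool :=
  ~~ [exists x in S, exists y in S, erestr S x y && connect (erestr S) y x].

(** cycle rank, by recursion with fuel (fuel #|S| suffices: every recursive
    call is on a proper subset). The minimum over the nonempty S is taken
    with neutral element #|T|, which is an upper bound of all values. *)
Fixpoint cr_rec (n : nat) (S : {set T}) : nat :=
  match n with
  | 0 => 0
  | n'.+1 =>
      if acyclic S then 0
      else if strongly_connected S then
        (\big[minn/#|T|]_(v in S) cr_rec n' (S :\ v)).+1
      else \max_(C in sccs S) cr_rec n' C
  end.

Definition cycle_rank (S : {set T}) : nat := cr_rec #|S| S.

Definition letters (X : seq T) : {set T} := [set x in X].

Definition position := (seq T * {set T})%type.

Definition vsc_pos (p : position) : bool :=
  (p.2 == set0) || is_scc (~: letters p.1) p.2.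

Definition start : position := ([::], [set: T]).

Definition vsc_succ_std (p p' : position) : bool :=
  let: (X, R) := p in let: (X', R') := p' in
  [&& vsc_pos p', prefix X X' || prefix X' X,
      #|(letters X :\: letters X') :|: (letters X' :\: letters X)| == 1 &
      [forall v' in R', exists v in R,
          sconn (~: (letters X :&: letters X')) v v']].

Definition vsc_succ (p p' : position) : bool :=
  if (p == start) && ~~ vsc_pos start then vsc_pos p' && (p'.1 == [::])
  else vsc_succ_std p p'.

Definition is_strategy (sigma : position -> seq T) : Prop :=
  forall p : position, vsc_pos p || (p == start) ->
    exists R' : {set T}, vsc_succ p (sigma p, R').

(** A search is s : nat -> position with length len : option nat
    (None = infinite, Some n = positions s 0, ..., s n). *)
Definition in_range (len : option nat) (i : nat) : bool :=
  if len is Some n then i <= n else true.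

Definition is_search_from (p0 : position) (s : nat -> position) (len : option nat) : Prop :=
  s 0 = p0 /\ forall i, in_range len i.+1 -> vsc_succ (s i) (s i.+1).

Definition complete_search (s : nat -> position) (len : option nat) : Prop :=
  if len is Some n then (s n).2 = set0 else True.

Definition winning_search (s : nat -> position) (len : option nat) : Prop :=
  exists n, in_range len n /\ (s n).2 = set0.

Definition consistent (sigma : position -> seq T) (s : nat -> position) (len : option nat) : Prop :=
  forall i, in_range len i.+1 -> (s i.+1).1 = sigma (s i).

Definition searcher_stationary (s : nat -> position) (len : option nat) : Prop :=
  forall i, in_range len i.+1 -> (s i).2 != set0 -> prefix (s i).1 (s i.+1).1.

Definition uses_at_most (k : nat) (s : nat -> position) (len : option nat) : Prop :=
  forall i, in_range len i -> size (s i).1 <= k.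

Definition complete_consistent (sigma : position -> seq T) s len : Prop :=
  [/\ is_search_from start s len, consistent sigma s len & complete_search s len].

Definition strategy_winning (sigma : position -> seq T) : Prop :=
  forall s len, complete_consistent sigma s len -> winning_search s len.

Definition strategy_stationary (sigma : position -> seq T) : Prop :=
  forall s len, complete_consistent sigma s len -> searcher_stationary s len.

Definition strategy_at_most (k : nat) (sigma : position -> seq T) : Prop :=
  forall s len, complete_consistent sigma s len -> uses_at_most k s len.

(** k is admissible for sstat_vsc: there is a searcher-stationary winning
    vsc-strategy using at most k searchers.  sstat_vsc(G) is the least such k. *)
Definition sstat_admissible (k : nat) : Prop :=
  exists sigma, [/\ is_strategy sigma, strategy_winning sigma,
                    strategy_stationary sigma & strategy_at_most k sigma].

End Digraph.

(* Main.v *)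
Require Import Defs.
From mathcomp Require Import all_boot.
Set Implicit Arguments. Unset Strict Implicit. Unset Printing Implicit Defensive.

Lemma bigmin_le (I:finType) (P: pred I) (F : I -> nat) x0 idx : P x0 -> \big[minn/idx]_(i | P i) F i <= F x0.
Proof.
move=> Px0; have := mem_index_enum x0.
change (x0 \in index_enum I -> \big[minn/idx]_(i <- index_enum I | P i) F i <= F x0).
elim: (index_enum I) => [//|i r IH]; rewrite big_cons inE.
case/orP=> [/eqP<-|/IH H]; first by rewrite Px0 geq_minl.
case: (P i) => //; exact: leq_trans (geq_minr _ _) H.
Qed.

Section G.
Variables (T : finType) (e : rel T).
Implicit Types (S C R A : {set T}) (x y z v : T).

Lemma erestr_mono (S S' : {set T}) : S \subset S' -> forall x y, connect (erestr e S) x y -> connect (erestr e S') x y.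
Proof.
move=> sub x y; apply: connect_sub => a b /=; case/and3P=> aS bS eab.
by apply: connect1; rewrite /erestr /= eab !(subsetP sub).
Qed.

Lemma sconn_refl S x : x \in S -> sconn e S x x.
Proof. by move=> xS; rewrite /sconn xS connect0. Qed.

Lemma sconn_sym S x y : sconn e S x y -> sconn e S y x.
Proof. by case/and4P=> ? ? ? ?; apply/and4P. Qed.

Lemma sconn_trans S x y z : sconn e S x y -> sconn e S y z -> sconn e S x z.
Proof.
case/and4P=> xS yS c1 c2; case/and4P=> _ zS c3 c4.
by rewrite /sconn xS zS (connect_trans c1 c3) (connect_trans c4 c2).
Qed.

Lemma sconn_mono S S' x y : S \subset S' -> sconn e S x y -> sconn e S' x y.
Proof.
move=> sub; case/and4P=> xS yS c1 c2.
by rewrite /sconn !(subsetP sub) // !(erestr_mono sub).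
Qed.

Lemma scc_of_eq S x y : sconn e S x y -> scc_of e S x = scc_of e S y.
Proof.
move=> H; apply/setP=> z; rewrite !inE; apply/idP/idP => H'.
  exact: sconn_trans (sconn_sym H) H'.
exact: sconn_trans H H'.
Qed.

Lemma scc_closed_path S x y : connect (erestr e S) x y -> connect (erestr e S) y x ->
  connect (erestr e (scc_of e S x)) x y.
Proof.
case/connectP=> p; elim: p x => [|z p IH] x /=; first by move=> _ ->.
case/andP=> exz pz ly yx.
have cyz : connect (erestr e S) y z.
  by apply: connect_trans yx (connect1 exz).
have xzS : sconn e S x z.
  have /and3P[xS zS _] := exz.
  have czy : connect (erestr e S) z y by apply/connectP; exists p.
  by rewrite /sconn xS zS (connect1 exz) (connect_trans czy yx).
rewrite (scc_of_eq xzS); apply: connect_trans (IH _ pz ly cyz).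
rewrite -(scc_of_eq xzS); apply: connect1.
have /and3P[xS zS exz'] := exz.
by rewrite /erestr /= exz' !inE xzS andbT sconn_refl.
Qed.


Lemma sconn_scc S x y : sconn e S x y -> sconn e (scc_of e S x) x y.
Proof.
move=> H; have /and4P[xS yS c1 c2] := H.
rewrite /sconn !inE sconn_refl // H (scc_closed_path c1 c2) /=.
by rewrite (scc_of_eq H) scc_closed_path.
Qed.

Lemma scc_sub S C : is_scc e S C -> C \subset S.
Proof.
by case/existsP=> x /andP[_ /eqP->]; apply/subsetP=> y; rewrite inE => /and4P[].
Qed.

Lemma scc_sc S C : is_scc e S C -> strongly_connected e C.
Proof.
case/existsP=> x /andP[xS /eqP->]; rewrite /strongly_connected.
apply/andP; split.
  by apply/set0Pn; exists x; rewrite inE sconn_refl.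
apply/forallP=> y; apply/implyP; rewrite inE => xy.
apply/forallP=> z; apply/implyP; rewrite inE => xz.
have yz := sconn_trans (sconn_sym xy) xz.
by rewrite (scc_of_eq xy) sconn_scc.
Qed.

Lemma scc_n0 S C : is_scc e S C -> C != set0.
Proof. by move/scc_sc; case/andP. Qed.

Lemma sc_scc S x : strongly_connected e S -> x \in S -> scc_of e S x = S.
Proof.
case/andP=> _ /forallP H xS; apply/setP=> y; rewrite inE.
apply/idP/idP; first by case/and4P.
by move=> yS; have := H x; rewrite xS /= => /forallP/(_ y); rewrite yS.
Qed.

Lemma sc_is_scc S : strongly_connected e S -> is_scc e S S.
Proof.
move=> H; have /andP[/set0Pn[x xS] _] := H.
by apply/existsP; exists x; rewrite xS (sc_scc H xS) eqxx.
Qed.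

Lemma scc_lt S C : is_scc e S C -> ~~ strongly_connected e S -> #|C| < #|S|.
Proof.
move=> H nsc; apply: proper_card; rewrite properEneq scc_sub // andbT.
by apply: contraNneq nsc => <-; apply: scc_sc H.
Qed.

Lemma scc_restrict A A' R C : is_scc e A R -> A' \subset A -> is_scc e (R :&: A') C ->
  is_scc e A' C.
Proof.
case/existsP=> r /andP[rA /eqP defR] sub.
case/existsP=> x /andP[xRA /eqP->]; have := xRA; rewrite inE => /andP[xR xA'].
apply/existsP; exists x; rewrite xA'; apply/eqP/setP=> y; rewrite !inE.
apply/idP/idP => H; first exact: sconn_mono (subsetIr _ _) H.
apply: sconn_mono (sconn_scc H); apply/subsetP=> z; rewrite !inE => xz.
have /and4P[_ zA' _ _] := xz; rewrite zA' andbT defR inE.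
have : sconn e A r x by move: xR; rewrite defR inE.
by move/sconn_trans; apply; apply: sconn_mono xz.
Qed.


Lemma acyclic0 : acyclic e set0.
Proof. by apply/negP; case/existsP=> x; rewrite in_set0. Qed.

Lemma cr_rec_set0 n : cr_rec e n set0 = 0.
Proof. by case: n => //= n; rewrite acyclic0. Qed.

Lemma cr_rec_fuel n m S : #|S| <= n -> #|S| <= m -> cr_rec e n S = cr_rec e m S.
Proof.
elim: n m S => [|n IH] [|m] S Hn Hm //.
- by move: Hn; rewrite leqn0 cards_eq0 => /eqP->; rewrite !cr_rec_set0.
- by move: Hm; rewrite leqn0 cards_eq0 => /eqP->; rewrite !cr_rec_set0.
rewrite /=; case: ifP => // _; case: ifP => sc.
  congr succn; apply: eq_bigr => v vS.
  have : #|S :\ v| < #|S| by rewrite (cardsD1 v S) vS.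
  move=> lt; apply: IH; rewrite -ltnS; apply: leq_trans lt _ => //.
apply: eq_bigr => C; rewrite inE => sccC.
have lt := scc_lt sccC (negbT sc).
apply: IH; rewrite -ltnS; apply: leq_trans lt _ => //.
Qed.

Lemma cr_acyclic S : acyclic e S -> cycle_rank e S = 0.
Proof. by rewrite /cycle_rank; case: #|S| => //= n ->. Qed.

Lemma cr_del R v : strongly_connected e R -> v \in R ->
  cycle_rank e R <= (cycle_rank e (R :\ v)).+1.
Proof.
move=> sc vR; rewrite /cycle_rank (cardsD1 v R) vR /=.
case: ifP => // _; rewrite sc ltnS.
rewrite add0n; exact: (@bigmin_le _ (fun w => w \in R) (fun w => cr_rec e #|R :\ v| (R :\ w))).
Qed.

Lemma scc_of_is S x : x \in S -> is_scc e S (scc_of e S x).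
Proof. by move=> xS; apply/existsP; exists x; rewrite xS eqxx. Qed.

Lemma cr_scc S : S != set0 -> exists2 C, is_scc e S C & cycle_rank e S <= cycle_rank e C.
Proof.
case/set0Pn=> x xS.
case Ha: (acyclic e S).
  by exists (scc_of e S x); [exact: scc_of_is | rewrite cr_acyclic].
case Hs: (strongly_connected e S); first by exists S => //; exact: sc_is_scc.
have : 0 < #|S| by apply/card_gt0P; exists x.
rewrite /cycle_rank; case Hc: #|S| => [//|n] _ /=.
rewrite Ha Hs.
have : 0 < #|sccs e S| by apply/card_gt0P; exists (scc_of e S x); rewrite inE scc_of_is.
case/(eq_bigmax_cond (fun C => cr_rec e n C)) => C0; rewrite inE => sC0 ->.
exists C0 => //; rewrite (@cr_rec_fuel n #|C0|) //.
by rewrite -ltnS -Hc scc_lt ?Hs.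
Qed.


Hypothesis Hirr : irreflexive e.
Hypothesis Hne : 0 < #|T|.

Lemma acyclic_single R v : R \subset [set v] -> acyclic e R.
Proof.
move=> sub; apply/negP; case/existsP=> x /andP[xR /existsP[y /andP[yR /andP[/and3P[_ _ exy] _]]]].
have := subsetP sub x xR; have := subsetP sub y yR; rewrite !inE => /eqP yv /eqP xv.
by move: exy; rewrite xv yv Hirr.
Qed.

Lemma letters_nil : letters (T:=T) [::] = set0.
Proof. by apply/setP=> x; rewrite !inE. Qed.

Lemma step c (p : position T) X' :
  vsc_pos e p || (p == start T) -> p.2 != set0 -> c <= cycle_rank e p.2 + #|letters p.1| ->
  c <= cycle_rank e [set: T] -> (exists R0, vsc_succ e p (X', R0)) -> prefix p.1 X' -> size X' <= c ->
  exists R', [&& vsc_succ e p (X', R'), R' != set0 & c <= cycle_rank e R' + #|letters X'|].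
Proof.
case: p => X R /= Hval Rn0 Hc HcG [R0 HR0] Hpre Hsz.
move: HR0; rewrite /vsc_succ; case: ifP => [/andP[/eqP Hst nvs] | Hnst].
  case/andP=> _ /eqP; rewrite /= => ->; case: Hst => _ _.
  have : [set: T] != set0 by apply/set0Pn; have /card_gt0P[x _] := Hne; exists x.
  case/cr_scc=> C sC crC; exists C.
  rewrite /vsc_pos /= letters_nil setC0 sC orbT (scc_n0 sC) cards0 addn0 /=.
  exact: leq_trans HcG crC.
have vR : vsc_pos e (X, R).
  case/orP: Hval => // /eqP Hst; move: Hnst; rewrite Hst eqxx /=.
  by case: (vsc_pos e (start T)).
have sccR : is_scc e (~: letters X) R by move: vR; rewrite /vsc_pos /= (negbTE Rn0).
rewrite /vsc_succ_std => /and4P[_ _ Hcard _].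
set L := letters X in sccR Hc Hcard *; set L' := letters X' in Hcard *.
have LL' : L \subset L'.
  have /prefixP[s Hs] := Hpre.
  by apply/subsetP=> x; rewrite /L /L' Hs !inE mem_cat => ->.
move: Hcard; rewrite (_ : L :\: L' = set0); last by apply/eqP; rewrite setD_eq0.
rewrite set0U => /cards1P[v Hv].
have memL' y : (y \in L') = (y == v) || (y \in L).
  case yL: (y \in L); first by rewrite orbT (subsetP LL').
  by have := congr1 (fun A => y \in A) Hv; rewrite /= in_setD in_set1 yL orbF.
have cardL' : #|L'| = #|L|.+1.
  by rewrite -(cardsID L L') Hv cards1 (setIidPr LL') addn1.
have RA := scc_sub sccR.
have A'A : ~: L' \subset ~: L by rewrite setCS.
set S := R :&: ~: L'.
have Hsz' : #|L'| <= c by rewrite /L' /letters cardsE; exact: leq_trans (card_size X') Hsz.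
have [crS Sn0] : cycle_rank e R <= (cycle_rank e S).+1 /\ S != set0.
  case vR': (v \in R).
    have -> : S = R :\ v.
      apply/setP=> y; rewrite in_setI in_setC memL' in_setD1 negb_or.
      case yR: (y \in R); rewrite ?andbF ?andbT //=.
      by have := subsetP RA y yR; rewrite in_setC => ->; rewrite andbT.
    split; first exact: cr_del (scc_sc sccR) vR'.
    apply/negP => /eqP S0.
    have : acyclic e R.
      apply: (acyclic_single (v := v)); apply/subsetP=> y yR; rewrite inE.
      apply/negPn/negP => yv; have : y \in R :\ v by rewrite !inE yv yR.
      by rewrite S0 in_set0.
    move/cr_acyclic => cr0; move: Hc Hsz'; rewrite cr0 add0n cardL' => H1 H2.
    by have := leq_trans H2 H1; rewrite ltnn.
  have -> : S = R.
    apply/setP=> y; rewrite in_setI in_setC memL' negb_or.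
    case yR: (y \in R); rewrite ?andbF //=.
    have := subsetP RA y yR; rewrite in_setC => ->; rewrite andbT.
    by apply: contraFneq vR' => <-.
  by split.
have [C sC crC] := cr_scc Sn0.
exists C; rewrite (scc_n0 sC) /=.
apply/andP; split; last first.
  rewrite cardL' addnS -addSn; apply: leq_trans Hc _; rewrite leq_add2r.
  exact: leq_trans crS _.
apply/and4P; split.
- by rewrite /vsc_pos /= (scc_restrict sccR A'A sC) orbT.
- by rewrite Hpre.
- by rewrite Hv cards1.
apply/forallP=> w; apply/implyP=> wC; apply/existsP; exists w.
have wS := subsetP (scc_sub sC) w wC; move: wS; rewrite inE => /andP[wR _].
by rewrite wR (setIidPl LL') sconn_refl // (subsetP RA).
Qed.


Lemma succ_pos (p p' : position T) : vsc_succ e p p' -> vsc_pos e p'.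
Proof.
rewrite /vsc_succ; case: ifP => _; first by case/andP.
by case: p => X R; case: p' => X' R' /and4P[].
Qed.

Lemma vsc_succ_set0 (p : position T) X' R : vsc_succ e p (X', R) -> vsc_succ e p (X', set0).
Proof.
rewrite /vsc_succ; case: ifP => _; first by case/andP=> _ ->; rewrite /vsc_pos eqxx.
case: p => X R0 /and4P[_ H1 H2 _]; rewrite /= /vsc_pos eqxx H1 H2 /=.
by apply/forallP=> v; rewrite in_set0.
Qed.

End G.

Theorem lemma2 (T : finType) (e : rel T) (Hirr : irreflexive e) (Hne : 0 < #|T|)
  (k : nat) :
  sstat_admissible e k -> (cycle_rank e [set: T]).+1 <= k.
Proof.
case=> sigma [Hstr Hwin Hstat Hk].
rewrite ltnNge; apply/negP => Hkc.
set c := cycle_rank e [set: T] in Hkc *.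
pose good (p : position T) X' R := [&& vsc_succ e p (X', R), R != set0 & c <= cycle_rank e R + #|letters X'|].
pose ch p X' := odflt set0 [pick R | good p X' R].
pose s := fix s n := if n is n'.+1 then (sigma (s n'), ch (s n') (sigma (s n'))) else start T.
have sS n : s n.+1 = (sigma (s n), ch (s n) (sigma (s n))) by [].
have succ p : vsc_pos e p || (p == start T) -> vsc_succ e p (sigma p, ch p (sigma p)).
  move=> Hv; rewrite /ch; case: pickP => [R /and3P[] // | _] /=.
  have [R H] := Hstr p Hv; exact: vsc_succ_set0 H.
have val n : vsc_pos e (s n) || (s n == start T).
  elim: n => [|n IH]; first by rewrite eqxx orbT.
  by rewrite (succ_pos (succ _ IH)).
have Hcc : complete_consistent e sigma s None.
  split => //; first by split => // i _; rewrite sS; exact: succ.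
have inv n : ((s n).2 != set0) && (c <= cycle_rank e (s n).2 + #|letters (s n).1|).
  elim: n => [|n /andP[Rn Hc]].
    rewrite /= letters_nil cards0 addn0 leqnn andbT.
    by apply/set0Pn; have /card_gt0P[x _] := Hne; exists x; rewrite inE.
  have [R' HR'] : exists R', good (s n) (sigma (s n)) R'.
    apply: (step Hirr Hne) => //.
    - exact: Hstr.
    - by have := Hstat s None Hcc n isT Rn; rewrite sS.
    - by have := Hk s None Hcc n.+1 isT; rewrite sS /= => H; exact: leq_trans H Hkc.
  rewrite sS /= /ch; case: pickP => [R /and3P[_ -> ->] // | /(_ R')].
  by rewrite HR'.
have [n [_ Hn]] := Hwin s None Hcc.
by have := inv n; rewrite Hn eqxx.
Qed.
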